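(* There exists a map of multipointed $d$-spaces $f:X\to Y$ whose underlying continuous map $f:|X|\to|Y|$ is a homeomorphism but such that $\vec{\mathrm{Sp}}(f):\vec{\mathrm{Sp}}(X)\to\vec{\mathrm{Sp}}(Y)$ is not an isomorphism of directed spaces.
   Context: $\mathcal{M}(1,1)$: non-decreasing surjective continuous maps $[0,1]\to[0,1]$; $\mathcal{I}(1)$: non-decreasing continuous maps $[0,1]\to[0,1]$; $\mu_\ell(t)=t/\ell$. A multipointed $d$-space is $(|X|,X^0,\mathbb{P}^{\mathrm{top}}X)$: a space, a set of states $X^0\subset|X|$, a set of continuous maps $[0,1]\to|X|$ (execution paths) with endpoints in $X^0$, closed under precomposition by $\mathcal{M}(1,1)$ and normalized composition $\gamma_1*_N\gamma_2$ ($\gamma_1(2t)$ on $[0,1/2]$, $\gamma_2(2t-1)$ on $[1/2,1]$); maps are continuous maps preserving states and execution paths. A directed space is $(|Y|,d(Y))$ with $d(Y)$ a set of paths $[0,1]\to|Y|$ containing constants, closed under normalized composition and precomposition by $\mathcal{I}(1)$; morphisms preserve directed paths. $\vec{\mathrm{Sp}}(X)$ is the directed space on $|X|$ whose directed paths are the constant paths and the Moore concatenations $(\gamma_1\phi_1\mu_{\ell_1})*\dots*(\gamma_n\phi_n\mu_{\ell_n})$ with $\ell_i>0$, $\sum\ell_i=1$, $\gamma_i$ execution paths, $\phi_i\in\mathcal{I}(1)$; $\vec{\mathrm{Sp}}(f)$ has the same underlying map as $f$. *)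

(* Defs.v *)
From HB Require Import structures.
From mathcomp Require Import all_boot all_order all_algebra.
From mathcomp Require Import all_classical all_reals all_analysis.
Set Implicit Arguments. Unset Strict Implicit. Unset Printing Implicit Defensive.
Import Order.TTheory GRing.Theory Num.Theory.
Local Open Scope classical_set_scope.
Local Open Scope ring_scope.

Import numFieldNormedType.Exports.
Section Defs.
Variable R : realType.

Definition I01_top : topologicalType := set_type (`[0, 1]%classic : set R).
Definition I01 : Type := I01_top.

Definition vI (s : I01) : R := set_val s.

Lemma clamp_in (t : R) : (`[0, 1]%classic : set R) (Num.min 1 (Num.max 0 t)).
Proof.
rewrite /= in_itv /=; apply/andP; split.
  by rewrite le_min ler01 le_max lexx.
by rewrite ge_min lexx.
Qed.

Definition clamp (t : R) : I01_top := exist _ (Num.min 1 (Num.max 0 t)) (mem_set (clamp_in t)).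

Definition I0 : I01_top := clamp 0.
Definition I1 : I01_top := clamp 1.

Definition in_I1 (phi : I01_top -> I01_top) : Prop :=
  continuous phi /\ (forall s t : I01_top, vI s <= vI t -> vI (phi s) <= vI (phi t)).

Definition in_M11 (phi : I01_top -> I01_top) : Prop :=
  in_I1 phi /\ (forall u : I01_top, exists s, phi s = u).

Definition ncomp (T : Type) (g1 g2 : I01_top -> T) : I01_top -> T :=
  fun s => if vI s <= 2^-1 then g1 (clamp (2 * vI s)) else g2 (clamp (2 * vI s - 1)).

Record mdspace := MDSpace {
  md_space :> topologicalType;
  md_states : set md_space;
  md_paths : set (I01_top -> md_space);
  md_paths_cont : forall g, md_paths g -> continuous g;
  md_paths_ends : forall g, md_paths g -> md_states (g I0) /\ md_states (g I1);
  md_paths_reparam : forall g phi, md_paths g -> in_M11 phi -> md_paths (g \o phi);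
  md_paths_ncomp : forall g1 g2, md_paths g1 -> md_paths g2 -> g1 I1 = g2 I0 ->
                   md_paths (ncomp g1 g2)
}.

Definition is_mdmap (X Y : mdspace) (f : X -> Y) : Prop :=
  continuous f /\ (forall x : X, @md_states X x -> @md_states Y (f x)) /\
  (forall g : I01_top -> X, @md_paths X g -> @md_paths Y (f \o g)).

Definition is_homeomorphism (X Y : topologicalType) (f : X -> Y) : Prop :=
  continuous f /\ exists g : Y -> X, continuous g /\ cancel f g /\ cancel g f.

Definition is_directed_space (T : topologicalType) (d : set (I01_top -> T)) : Prop :=
  (forall g, d g -> continuous g) /\
  (forall x : T, d (fun _ => x)) /\
  (forall g1 g2, d g1 -> d g2 -> g1 I1 = g2 I0 -> d (ncomp g1 g2)) /\
  (forall g phi, d g -> in_I1 phi -> d (g \o phi)).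

Definition is_dmap (T U : topologicalType) (dT : set (I01_top -> T))
  (dU : set (I01_top -> U)) (f : T -> U) : Prop :=
  continuous f /\ (forall g, dT g -> dU (f \o g)).

Definition is_dspace_iso (T U : topologicalType) (dT : set (I01_top -> T))
  (dU : set (I01_top -> U)) (f : T -> U) : Prop :=
  is_dmap dT dU f /\
  exists g : U -> T, is_dmap dU dT g /\ cancel f g /\ cancel g f.

(** Moore concatenation (g_0 phi_0 mu_{l_0}) * ... * (g_{n-1} phi_{n-1} mu_{l_{n-1}})
    of an n-tuple (n >= 1) of execution paths g_i reparametrized by phi_i in I(1),
    with lengths l_i > 0 summing to 1.  The i-th piece occupies
    [L_i, L_i + l_i] with L_i = l_0 + ... + l_{i-1}; consecutive pieces must
    match at their endpoints for the Moore composition to be defined. *)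
Definition moore_start (n : nat) (l : 'I_n -> R) (i : 'I_n) : R :=
  \sum_(j < n | (j < i)%N) l j.

Definition is_moore_concat (X : mdspace) (delta : I01_top -> X) : Prop :=
  exists (n : nat) (l : 'I_n -> R) (g : 'I_n -> (I01_top -> X))
         (phi : 'I_n -> (I01_top -> I01_top)),
    (0 < n)%N /\
    (forall i, 0 < l i) /\ (\sum_(i < n) l i = 1) /\
    (forall i, @md_paths X (g i)) /\ (forall i, in_I1 (phi i)) /\
    (forall (i j : 'I_n), (j = i.+1 :> nat) -> g i (phi i I1) = g j (phi j I0)) /\
    (forall (i : 'I_n) (t : I01_top),
        moore_start l i <= vI t <= moore_start l i + l i ->
        delta t = g i (phi i (clamp ((vI t - moore_start l i) / l i)))).

Definition Sp_paths (X : mdspace) : set (I01_top -> X) :=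
  fun delta => (exists x : X, delta = fun _ => x) \/ is_moore_concat delta.

End Defs.
Arguments Sp_paths {R} X _.

(* Main.v *)
Require Import Defs.
From HB Require Import structures.
From mathcomp Require Import all_boot all_order all_algebra.
From mathcomp Require Import all_classical all_reals all_analysis.
Local Open Scope classical_set_scope.
Import Order.TTheory GRing.Theory Num.Theory.
Definition ibool : Type := bool.
HB.instance Definition _ := Choice.on ibool.
Definition iop (A : set ibool) : Prop := A = set0 \/ A = setT.
Lemma iopT : iop setT. Proof. by right. Qed.
Lemma iopI : setI_closed iop.
Proof. by move=> A B [->|->] [->|->]; rewrite ?set0I ?setI0 ?setIT ?setTI; first [by left | by right]. Qed.
Lemma iop_bigU (I : Type) (f : I -> set ibool) : (forall i, iop (f i)) -> iop (\bigcup_i f i).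
Proof.
move=> H; have [[i fi]|N] := pselect (exists i, f i = setT).
  by right; apply/seteqP; split=> // x _; exists i => //; rewrite fi.
left; apply/seteqP; split=> // x [i _ fix0]; case: (H i) => fi; first by rewrite fi in fix0.
by exfalso; apply: N; exists i.
Qed.
HB.instance Definition _ := isOpenTopological.Build ibool iopT iopI iop_bigU.
Lemma icont (T : topologicalType) (f : T -> ibool) : continuous f.
Proof.
apply/continuousP => A oA.
have : iop A by exact: oA.
case=> ->; [rewrite preimage_set0; exact: open0 | rewrite preimage_setT; exact: openT].
Qed.

Section S.
Variable R : realType.

Definition Xsp : mdspace R :=
  @MDSpace R ibool set0 set0 (fun g (h : set0 g) => match h with end)
    (fun g (h : set0 g) => match h with end)
    (fun g phi (h : set0 g) _ => h)
    (fun g1 g2 (h : set0 g1) _ _ => match h with end).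

Definition Ysp : mdspace R :=
  @MDSpace R ibool setT setT (fun g _ => @icont _ g)
    (fun g _ => conj I I) (fun _ _ _ _ => I) (fun _ _ _ _ _ => I).

Lemma vI_clamp (x : R) : vI (clamp x) = (Num.min 1 (Num.max 0 x))%R.
Proof. by []. Qed.

Lemma clamp_vI (t : I01 R) : clamp (vI t) = t.
Proof.
apply: val_inj => /=.
have := set_valP t; rewrite /= in_itv /= => /andP [h0 h1].
rewrite /vI (max_r h0) (min_r h1) //.
Qed.

Theorem proposition9p2' :
  exists (X Y : mdspace R) (f : X -> Y),
    is_mdmap f /\ is_homeomorphism f /\
    ~ is_dspace_iso (Sp_paths X) (Sp_paths Y) f.
Proof.
exists Xsp, Ysp, (fun x : ibool => x : ibool).
split; [split; [exact: icont | split => // x []] |].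
split; [split; [exact: icont | exists (fun x : ibool => x : ibool); split; [exact: icont| by []]]|].
move=> [_ [g [[_ Hg] [fg gf]]]].
pose delta : I01_top R -> Ysp := fun s => (vI s == 0%R) : ibool.
have Hd : Sp_paths Ysp delta.
  right; exists 1%N, (fun _ => 1%R), (fun _ => delta), (fun _ => id).
  split => //; split => //; split; first by rewrite big_ord1.
  split => //; split.
    move=> _; split; first by move=> x; apply: cvg_id.
    by move=> s t.
  split; first by move=> [i hi] [j hj] /= E; move: hj; rewrite E.
  move=> [i hi] t _; rewrite /moore_start.
  have -> : (\sum_(j < 1 | (j < i)%N) (1:R) = 0)%R.
    by rewrite big_pred0 // => -[j hj] /=; case: i hi => //; case: j hj.
  by rewrite (GRing.subr0 (_ : R)) (GRing.divr1 (_ : R)) clamp_vI.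
have := Hg _ Hd; case.
  move=> [x E].
  have E0 := congr1 (fun h => h (I0 R)) E; have E1 := congr1 (fun h => h (I1 R)) E.
  simpl in E0, E1.
  have : delta (I0 R) = delta (I1 R).
    by rewrite -[delta (I0 R)]gf -[delta (I1 R)]gf E0 E1.
  rewrite /delta !vI_clamp /=.
  by rewrite maxxx ?min_r ?max_r ?min_l ?ler01 ?oner_eq0 ?eqxx.
move=> [n [l [g' [phi [n0 [_ [_ [Hp _]]]]]]]].
by case: (Hp (Ordinal n0)).
Qed.
End S.

Theorem proposition9p2 (R : realType) :
  exists (X Y : mdspace R) (f : X -> Y),
    is_mdmap f /\ is_homeomorphism f /\
    ~ is_dspace_iso (Sp_paths X) (Sp_paths Y) f.
Proof. exact: proposition9p2'. Qed.
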